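(* Let $H:\mathbb{R}^n\to\mathbb{R}$ be $\mu_H$-strongly convex with $\mu_H>0$, let $f^i_{j_i}:\mathbb{R}^n\to\mathbb{R}$ ($i\in[S]$, $j_i\in[I_i]$) be convex, and let $X\subset\mathbb{R}^n$ be nonempty, compact and convex. Let $m:=\sum_{i=1}^S I_i$, $F:=\sum_{i=1}^S\sum_{j_i=1}^{I_i} f^i_{j_i}$, and let $\{x_k\}_{k=1}^\infty$ be a sequence generated by FISM (described in the context) with positive stepsizes $\{\gamma_k\}_{k=1}^\infty$, $\{\lambda_k\}_{k=1}^\infty$. Suppose that $0<\gamma_k\lambda_k\mu_H\le 2m$ for all $k\ge 1$ and that $\{\lambda_k\}_{k=1}^\infty$ is nonincreasing. For each $k\ge1$ let $x^*_{\lambda_k}$ be the unique minimizer of $F+\lambda_k H$ over $X$. Then for all $k\ge 2$, $$\|x_{k+1}-x^*_{\lambda_k}\|^2\le\Big(1-\frac{\gamma_k\lambda_k\mu_H}{2m}\Big)\|x_k-x^*_{\lambda_{k-1}}\|^2+\frac{4mC_H^2}{\gamma_k\lambda_k\mu_H^3}\Big(1-\frac{\lambda_{k-1}}{\lambda_k}\Big)^2+\gamma_k^2 C,$$ where $C:=4m^3\Big(C_f^2+\frac{2\lambda_1^2C_H^2}{m^2}\Big)+2C_fm^2\Big(C_f+\frac{\lambda_1C_H}{m}\Big)$.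
   Context: Notation: $[s]:=\{1,\dots,s\}$; $P_X$ is the Euclidean metric projection onto $X$; $\partial$ denotes the convex subdifferential. Constants: $C_f>0$ is a constant such that for all $i\in[S]$, $j_i\in[I_i]$ and all $x,y\in X$, every $g\in\partial f^i_{j_i}(x)$ satisfies $\|g\|\le C_f$ and $|f^i_{j_i}(x)-f^i_{j_i}(y)|\le C_f\|x-y\|$; $C_H>0$ is a constant such that for all $x,y\in X$, every $g\in\partial H(x)$ satisfies $\|g\|\le C_H$, $|H(x)-H(y)|\le C_H\|x-y\|$ and $|H(x)|\le C_H$ (such constants exist by compactness of $X$). FISM (Federated Incremental Subgradient Method): given a starting point $x_1\in\mathbb{R}^n$ and positive stepsizes $\{\gamma_k\},\{\lambda_k\}$, for $k=1,2,\dots$: pick $\mathcal{H}_k\in\partial H(x_k)$; for every client $i\in[S]$ set $x^i_{k,1}=x_k$ and for $j_i=1,\dots,I_i$ pick $g^i_{k,j_i}\in\partial f^i_{j_i}(x^i_{k,j_i})$ and set $x^i_{k,j_i+1}=P_X\big[x^i_{k,j_i}-\gamma_k g^i_{k,j_i}-\frac{\gamma_k\lambda_k}{m}\mathcal{H}_k\big]$; then set $x^i_k=x^i_{k,I_i+1}$ and $x_{k+1}=\frac1S\sum_{i=1}^S x^i_k$. *)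

(* Defs.v *)
(* R^n is represented as 'rV[R]_n. *)
From HB Require Import structures.
From mathcomp Require Import all_boot all_order all_algebra.
From mathcomp Require Import all_classical all_reals all_analysis.
Set Implicit Arguments. Unset Strict Implicit. Unset Printing Implicit Defensive.
Import Order.TTheory GRing.Theory Num.Theory.
Import numFieldTopology.Exports numFieldNormedType.Exports.
Local Open Scope ring_scope.
Local Open Scope classical_set_scope.

Section Defs.
Variables (R : realType) (n : nat).
Local Notation vec := 'rV[R]_n.

Definition dotv (u v : vec) : R := \sum_(i < n) u ord0 i * v ord0 i.
Definition enorm (u : vec) : R := Num.sqrt (dotv u u).

Definition cvx_set (X : set vec) : Prop :=
  forall x y t, X x -> X y -> 0 <= t -> t <= 1 -> X (t *: x + (1 - t) *: y).

Definition convex_fun (f : vec -> R) : Prop :=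
  forall x y t, 0 <= t -> t <= 1 ->
    f (t *: x + (1 - t) *: y) <= t * f x + (1 - t) * f y.

Definition strongly_convex (mu : R) (f : vec -> R) : Prop :=
  forall x y t, 0 <= t -> t <= 1 ->
    f (t *: x + (1 - t) *: y) <=
      t * f x + (1 - t) * f y - mu / 2 * t * (1 - t) * enorm (x - y) ^+ 2.

Definition subgrad (f : vec -> R) (x g : vec) : Prop :=
  forall y, f x + dotv g (y - x) <= f y.

Definition is_proj (X : set vec) (y p : vec) : Prop :=
  X p /\ forall z, X z -> enorm (y - p) <= enorm (y - z).

Definition is_argmin (X : set vec) (phi : vec -> R) (x : vec) : Prop :=
  X x /\ forall z, X z -> phi x <= phi z.

End Defs.

(* Main.v *)
Require Import Defs.
From HB Require Import structures.
From mathcomp Require Import all_boot all_order all_algebra.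
From mathcomp Require Import all_classical all_reals all_analysis.
From mathcomp Require Import ring lra.
Import Order.TTheory GRing.Theory Num.Theory.
Import numFieldTopology.Exports numFieldNormedType.Exports.
Local Open Scope ring_scope.
Local Open Scope classical_set_scope.
Section Vec.
Context {R : realType} {n : nat}.
Local Notation vec := 'rV[R]_n.
Implicit Types (u v w : vec) (c : R).

Lemma dotvDl u v w : dotv (u + v) w = dotv u w + dotv v w.
Proof. rewrite /dotv -big_split; apply: eq_bigr => i _; by rewrite mxE mulrDl. Qed.
Lemma dotvC u v : dotv u v = dotv v u.
Proof. rewrite /dotv; apply: eq_bigr => i _; by rewrite mulrC. Qed.
Lemma dotvDr u v w : dotv w (u + v) = dotv w u + dotv w v.
Proof. by rewrite dotvC dotvDl !(dotvC w). Qed.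
Lemma dotvZl c u v : dotv (c *: u) v = c * dotv u v.
Proof. rewrite /dotv mulr_sumr; apply: eq_bigr => i _; by rewrite mxE mulrA. Qed.
Lemma dotvZr c u v : dotv u (c *: v) = c * dotv u v.
Proof. by rewrite dotvC dotvZl dotvC. Qed.
Lemma dotvNl u v : dotv (- u) v = - dotv u v.
Proof. by rewrite -scaleN1r dotvZl mulN1r. Qed.
Lemma dotvNr u v : dotv u (- v) = - dotv u v.
Proof. by rewrite dotvC dotvNl dotvC. Qed.
Lemma dotvBl u v w : dotv (u - v) w = dotv u w - dotv v w.
Proof. by rewrite dotvDl dotvNl. Qed.
Lemma dotvBr u v w : dotv w (u - v) = dotv w u - dotv w v.
Proof. by rewrite dotvDr dotvNr. Qed.
Lemma dotv_ge0 u : 0 <= dotv u u.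
Proof. rewrite /dotv; apply: sumr_ge0 => i _; exact: mulr_ge0_le0 || by rewrite -expr2 sqr_ge0. Qed.
Lemma enorm_ge0 u : 0 <= enorm u.
Proof. exact: sqrtr_ge0. Qed.
Lemma enorm2 u : enorm u ^+ 2 = dotv u u.
Proof. by rewrite /enorm sqr_sqrtr // dotv_ge0. Qed.

Lemma dotv0_eq u : dotv u u = 0 -> forall v, dotv u v = 0.
Proof.
move=> h v; rewrite /dotv big1 // => i _.
have /(_ i isT) : forall i, true -> u ord0 i * u ord0 i = 0.
  apply: psumr_eq0P h => j _; by rewrite -expr2 sqr_ge0.
by move/eqP; rewrite mulf_eq0 orbb => /eqP ->; rewrite mul0r.
Qed.

Lemma enorm0_dot u v : enorm u = 0 -> dotv u v = 0.
Proof. by move=> h; apply: dotv0_eq; rewrite -enorm2 h expr0n. Qed.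

Lemma CS u v : dotv u v <= enorm u * enorm v.
Proof.
have [a0|apos] := eqVneq (enorm u) 0; first by rewrite enorm0_dot // a0 mul0r.
have [b0|bpos] := eqVneq (enorm v) 0.
  by rewrite dotvC enorm0_dot // b0 mulr0.
set a := enorm v; set b := enorm u.
have h := dotv_ge0 (a *: u - b *: v).
rewrite dotvBl !dotvBr !dotvZl !dotvZr -!enorm2 (dotvC v u) -/a -/b in h.
have ha : 0 < a by rewrite lt0r bpos enorm_ge0.
have hb : 0 < b by rewrite lt0r apos enorm_ge0.
have hab : 0 < a * b by exact: mulr_gt0.
rewrite -subr_ge0; rewrite -(pmulr_rge0 _ hab).
nra.
Qed.

Lemma CSN u v : - dotv u v <= enorm u * enorm v.
Proof. by rewrite -dotvNr; apply: le_trans (CS _ _) _; rewrite /enorm dotvNl dotvNr opprK. Qed.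

Lemma enormD2 u v : enorm (u + v) ^+ 2 = enorm u ^+ 2 + 2 * dotv u v + enorm v ^+ 2.
Proof. rewrite !enorm2 dotvDl !dotvDr (dotvC v u); ring. Qed.
Lemma enormB2 u v : enorm (u - v) ^+ 2 = enorm u ^+ 2 - 2 * dotv u v + enorm v ^+ 2.
Proof. rewrite !enorm2 dotvBl !dotvBr (dotvC v u); ring. Qed.

Lemma sq_le a b : 0 <= a -> 0 <= b -> (a ^+ 2 <= b ^+ 2) = (a <= b :> R).
Proof. by move=> ha hb; rewrite ler_pXn2r // nnegrE. Qed.

Lemma enormD u v : enorm (u + v) <= enorm u + enorm v.
Proof.
rewrite -sq_le ?addr_ge0 ?enorm_ge0 // enormD2.
have := CS u v; move=> h; rewrite sqrrD; lra.
Qed.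

Lemma enormZ c u : enorm (c *: u) = `|c| * enorm u.
Proof.
rewrite /enorm dotvZl dotvZr mulrA -expr2 sqrtrM ?sqr_ge0 //.
by rewrite sqrtr_sqr.
Qed.
Lemma enormN u : enorm (- u) = enorm u.
Proof. by rewrite /enorm dotvNl dotvNr opprK. Qed.
Lemma enormB_sym u v : enorm (u - v) = enorm (v - u).
Proof. by rewrite -enormN opprB. Qed.

End Vec.
Section Gen.
Context {R : realType} {n : nat}.
Local Notation vec := 'rV[R]_n.
Implicit Types (u v w : vec) (c : R).

Lemma le0_small (a b : R) : 0 <= b -> (forall t, 0 < t -> t < 1 -> a <= t * b) -> a <= 0.
Proof.
move=> hb h; rewrite leNgt; apply/negP => ha.
have hab : 0 < a + b by lra.
have ht : 0 < a / (2 * (a + b)) by rewrite divr_gt0 // mulr_gt0.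
have ht1 : a / (2 * (a + b)) < 1.
  by rewrite ltr_pdivrMr ?mulr_gt0 //; lra.
have := h _ ht ht1.
rewrite mulrAC ler_pdivlMr ?mulr_gt0 //; nra.
Qed.

Lemma comb_sub t u v : t *: u + (1 - t) *: v - v = t *: (u - v).
Proof. by rewrite scalerBl scale1r scalerBr addrCA addrC addrK. Qed.

Lemma proj_nonexp (X : set vec) z p y : cvx_set X -> is_proj X z p -> X y ->
  enorm (p - y) <= enorm (z - y).
Proof.
move=> cX [Xp hp] Xy.
have key : dotv (z - p) (y - p) <= 0.
  apply: (@le0_small _ (enorm (y - p) ^+ 2 / 2)).
    by rewrite divr_ge0 // sqr_ge0.
  move=> t t0 t1.
  have Xw := cX y p t Xy Xp (ltW t0) (ltW t1).
  have := hp _ Xw.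
  rewrite -sq_le ?enorm_ge0 //.
  have -> : z - (t *: y + (1 - t) *: p) = (z - p) - t *: (y - p).
    by rewrite -comb_sub opprB addrA subrK.
  rewrite [X in _ <= X]enormB2 enormZ dotvZr ger0_norm ?(ltW t0) //.
  nra.
rewrite -sq_le ?enorm_ge0 //.
have -> : z - y = (z - p) - (y - p) by rewrite opprB addrA subrK.
rewrite [X in _ <= X]enormB2 (enormB_sym p y).
have := sqr_ge0 (enorm (z - p)); lra.
Qed.

Lemma strong_subgrad (mu : R) (h : vec -> R) (x0 gg y : vec) : strongly_convex mu h -> subgrad h x0 gg -> 0 <= mu ->
  h x0 + dotv gg (y - x0) + mu / 2 * enorm (y - x0) ^+ 2 <= h y.
Proof.
move=> sc sg mu0.
rewrite -subr_ge0 -oppr_le0 opprB.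
apply: (@le0_small _ (mu / 2 * enorm (y - x0) ^+ 2)).
  by rewrite mulr_ge0 ?divr_ge0 ?sqr_ge0.
move=> t t0 t1.
have hs := sc y x0 t (ltW t0) (ltW t1).
have hg := sg (t *: y + (1 - t) *: x0).
rewrite comb_sub dotvZr in hg.
rewrite -(ler_pM2l t0).
nra.
Qed.

Lemma argmin_strong (X : set vec) (phi : vec -> R) (c : R) (xs z : vec) : cvx_set X -> strongly_convex c phi ->
  0 <= c -> is_argmin X phi xs -> X z ->
  phi xs + c / 2 * enorm (z - xs) ^+ 2 <= phi z.
Proof.
move=> cX sc c0 [Xxs hm] Xz.
rewrite -subr_ge0 -oppr_le0 opprB.
apply: (@le0_small _ (c / 2 * enorm (z - xs) ^+ 2)).
  by rewrite mulr_ge0 ?divr_ge0 ?sqr_ge0.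
move=> t t0 t1.
have hs := sc z xs t (ltW t0) (ltW t1).
have := hm _ (cX z xs t Xz Xxs (ltW t0) (ltW t1)).
move=> hw.
rewrite -(ler_pM2l t0).
nra.
Qed.

Lemma sc_comb (F h : vec -> R) (lam mu : R) : convex_fun F -> strongly_convex mu h -> 0 <= lam ->
  strongly_convex (lam * mu) (fun y => F y + lam * h y).
Proof.
move=> cF sh l0 u v t t0 t1 /=.
have h1 := cF u v t t0 t1.
have h2 := sh u v t t0 t1.
have h3 := ler_wpM2l l0 h2.
nra.
Qed.

Lemma convex_sum S (I : 'I_S -> nat) (f : 'I_S -> nat -> vec -> R) :
  (forall i j, (1 <= j <= I i)%N -> convex_fun (f i j)) ->
  convex_fun (fun y => \sum_(i < S) \sum_(1 <= j < (I i).+1) f i j y).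
Proof.
move=> hf u v t t0 t1 /=.
rewrite !mulr_sumr -big_split; apply: ler_sum => i _.
rewrite !mulr_sumr -big_split; apply: ler_sum_nat => j /andP[j1 j2].
by apply: (hf i j) => //; rewrite j1 /= -ltnS.
Qed.

Lemma avg_in (X : set vec) S (p : 'I_S -> vec) : cvx_set X -> (0 < S)%N ->
  (forall i, X (p i)) -> X (S%:R^-1 *: \sum_i p i).
Proof.
case: S p => [//|N] p cX _; elim: N p => [|N IH] p hp.
  by rewrite big_ord1 invr1 scale1r.
rewrite big_ord_recr /=.
have hI := IH (fun i => p (widen_ord (leqnSn _) i)) (fun i => hp _).
have -> : (N.+2)%:R^-1 *: (\sum_(i < N.+1) p (widen_ord (leqnSn N.+1) i) + p ord_max)
  = ((N.+1)%:R / (N.+2)%:R) *: ((N.+1)%:R^-1 *: \sum_(i < N.+1) p (widen_ord (leqnSn N.+1) i))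
    + (1 - (N.+1)%:R / (N.+2)%:R) *: p ord_max.
  rewrite scalerDr scalerA; congr (_ *: _ + _ *: _).
    field; rewrite ?negb_or; do ?[apply/andP; split]; apply: lt0r_neq0; have := ler0n R N; lra.
  field; rewrite ?negb_or; do ?[apply/andP; split]; apply: lt0r_neq0; have := ler0n R N; lra.
apply: cX; [exact: hI | exact: hp | by rewrite divr_ge0 |].
by rewrite ler_pdivrMr ?ltr0n // mul1r ler_nat.
Qed.

Lemma sum_sq S (a : 'I_S -> R) : (\sum_i a i) ^+ 2 <= S%:R * \sum_i a i ^+ 2.
Proof.
have h : 0 <= \sum_i \sum_j (a i - a j) ^+ 2.
  by apply: sumr_ge0 => i _; apply: sumr_ge0 => j _; exact: sqr_ge0.
have e : \sum_i \sum_j (a i - a j) ^+ 2 = 2 * (S%:R * \sum_i a i ^+ 2) - 2 * (\sum_i a i) ^+ 2.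
  transitivity (\sum_(i < S) (S%:R * a i ^+ 2 + \sum_(j < S) a j ^+ 2 - 2 * (a i * \sum_(j < S) a j))).
    apply: eq_bigr => i _.
    have -> : S%:R * a i ^+ 2 = \sum_(j < S) a i ^+ 2 by rewrite sumr_const card_ord mulr_natl.
    rewrite !mulr_sumr -big_split -sumrN -big_split /=.
    by apply: eq_bigr => j _; rewrite sqrrB; ring.
  rewrite !big_split /= sumrN sumr_const card_ord -!mulr_sumr -mulr_suml -mulr_natl expr2; ring.
lra.
Qed.

Lemma sum_norm2 S (v : 'I_S -> vec) :
  enorm (\sum_i v i) ^+ 2 <= S%:R * \sum_i enorm (v i) ^+ 2.
Proof.
rewrite enorm2 /dotv.
under eq_bigr do rewrite summxE -expr2.
under [X in _ <= _ * X]eq_bigr do rewrite enorm2 /dotv.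
rewrite exchange_big mulr_sumr /=; apply: ler_sum => c _.
rewrite [X in _ <= _ * X](eq_bigr (fun i => v i ord0 c ^+ 2)); last by move=> i _; rewrite expr2.
exact: sum_sq.
Qed.

End Gen.
Section Client.
Context {R : realType} {n : nat}.
Local Notation vec := 'rV[R]_n.

Lemma client (X : set vec) (N : nat) (fj : nat -> vec -> R) (h : vec -> R)
  (xsj gj : nat -> vec) (Hk xk y : vec) (gam lam mu Cf CH mr : R) :
  cvx_set X -> X xk -> X y -> 0 < gam -> 0 < lam -> 0 < mr -> 0 <= mu ->
  0 <= Cf -> 0 <= CH ->
  strongly_convex mu h -> subgrad h xk Hk -> enorm Hk <= CH ->
  xsj 1%N = xk ->
  (forall j, (1 <= j <= N)%N -> subgrad (fj j) (xsj j) (gj j) /\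
      is_proj X (xsj j - gam *: gj j - (gam * lam / mr) *: Hk) (xsj j.+1)) ->
  (forall j, (1 <= j <= N)%N -> forall y, X y -> forall gg,
      subgrad (fj j) y gg -> enorm gg <= Cf) ->
  (forall j, (1 <= j <= N)%N -> forall y z, X y -> X z ->
      `|fj j y - fj j z| <= Cf * enorm (y - z)) ->
  forall j, (j <= N)%N ->
    X (xsj j.+1) /\
    enorm (xsj j.+1 - xk) <= j%:R * (gam * (Cf + lam * CH / mr)) /\
    enorm (xsj j.+1 - y) ^+ 2 <= enorm (xk - y) ^+ 2
       - 2 * gam * \sum_(1 <= l < j.+1) (fj l xk - fj l y)
       - j%:R / mr * (2 * gam * lam * (h xk - h y) + gam * lam * mu * enorm (xk - y) ^+ 2)
       + gam ^+ 2 * (Cf + lam * CH / mr) ^+ 2 * j%:R ^+ 2.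
Proof.
move=> cX Xxk Xy g0 l0 m0 mu0 Cf0 CH0 scH sgH HkB x1 hstep hCf hLf.
set G := Cf + lam * CH / mr.
have c0 : 0 <= lam * CH / mr by apply: divr_ge0; [apply: mulr_ge0; lra | lra].
have G0 : 0 <= G by rewrite /G; lra.
have cc0 : 0 <= gam * lam / mr by apply: divr_ge0; [apply: mulr_ge0; lra | lra].
elim=> [_|j IH jN].
  rewrite x1 subrr; split=> //; split.
    by rewrite /enorm /dotv big1 ?sqrtr0 ?mul0r // => i _; rewrite mxE mul0r.
  rewrite big_geq // mul0r mul0r expr0n /= mulr0; lra.
have [Xj [ej bj]] := IH (ltnW jN).
have l1 : (1 <= j.+1 <= N)%N by rewrite ltn0Sn jN.
have [sgj prj] := hstep _ l1.
set xj := xsj j.+1 in Xj ej bj sgj prj *.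
set c := gam * lam / mr in prj.
set v := gam *: gj j.+1 + c *: Hk.
have gB := hCf _ l1 _ Xj _ sgj.
have vB : enorm v <= gam * G.
  apply: le_trans (enormD _ _) _.
  rewrite !enormZ !ger0_norm ?(ltW g0) //.
  have h1 := ler_wpM2l (ltW g0) gB.
  have h2 : c * enorm Hk <= c * CH by apply: ler_wpM2l.
  have -> : gam * G = gam * Cf + c * CH by rewrite /G /c; field; rewrite gt_eqF.
  lra.
have ez : xj - gam *: gj j.+1 - c *: Hk = xj - v by rewrite /v opprD addrA.
rewrite ez in prj.
have Xp : X (xsj j.+2) by case: prj.
split=> //.
have pB : enorm (xsj j.+2 - xj) <= enorm v.
  have := @proj_nonexp _ _ X _ _ _ cX prj Xj.
  by rewrite addrAC subrr add0r enormN.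
split.
  have -> : xsj j.+2 - xk = (xsj j.+2 - xj) + (xj - xk) by rewrite addrA subrK.
  apply: le_trans (enormD _ _) _.
  rewrite -natr1 mulrDl mul1r; lra.
have pY := @proj_nonexp _ _ X _ _ _ cX prj Xy.
rewrite -sq_le ?enorm_ge0 // in pY.
have e1 : xj - v - y = (xj - y) - v by rewrite addrAC.
rewrite e1 [X in _ <= X]enormB2 /v dotvDr !dotvZr in pY.
set e := enorm (xj - xk) in ej.
set A := dotv (xj - y) (gj j.+1) in pY.
set B := dotv (xj - y) Hk in pY.
set Dk := enorm (xk - y) ^+ 2.
have hA : fj j.+1 xk - fj j.+1 y - Cf * e <= A.
  have := sgj y; rewrite dotvC -[y - xj]opprB dotvNl -/A => h1.
  have := hLf _ l1 _ _ Xj Xxk; rewrite ler_norml -/xj -/e => /andP[h2 _].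
  lra.
have hB : h xk - h y + mu / 2 * Dk - e * CH <= B.
  have e2 : B = dotv (xj - xk) Hk + dotv (xk - y) Hk.
    by rewrite /B -dotvDl addrA subrK.
  have h1 := CSN (xj - xk) Hk.
  have h2 : e * enorm Hk <= e * CH by apply: ler_wpM2l => //; exact: enorm_ge0.
  have h3 := @strong_subgrad _ _ mu h xk Hk y scH sgH mu0.
  rewrite dotvC -[y - xk]opprB dotvNl enormN -/Dk in h3.
  rewrite e2; rewrite -/e in h1; lra.
have hA' := ler_wpM2l (ltW g0) hA.
have hB' := ler_wpM2l cc0 hB.
have hE : e * (gam * G) <= (j%:R * (gam * G)) * (gam * G).
  by apply: ler_wpM2r => //; apply: mulr_ge0 => //; exact: ltW.
have hV : enorm v ^+ 2 <= (gam * G) ^+ 2.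
  by rewrite sq_le ?enorm_ge0 // mulr_ge0 // ltW.
have eq1 : gam * (Cf * e) + c * (e * CH) = e * (gam * G).
  rewrite /G /c; field; by rewrite gt_eqF.
have eq2 : (j.+1)%:R / mr * (2 * gam * lam * (h xk - h y) + gam * lam * mu * Dk)
   = j%:R / mr * (2 * gam * lam * (h xk - h y) + gam * lam * mu * Dk)
     + 2 * c * (h xk - h y) + c * mu * Dk.
  rewrite /c -natr1; field; by rewrite gt_eqF.
have ej1 : (j.+1)%:R = j%:R + 1 :> R by rewrite -natr1.
rewrite eq2 big_nat_recr //= ej1.
rewrite -/v in pY hV.
rewrite -/Dk in bj; rewrite -/c in hB'.
lra.
Qed.
End Client.
Section Arith.
Context {R : realType}.

Lemma combine_arith (a p d Q Dk : R) : 0 < a -> a <= 2 -> 0 <= p -> 0 <= d ->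
  d ^+ 2 <= Q -> 0 <= Dk -> Dk <= (p + d) ^+ 2 ->
  (1 - a) * Dk <= (1 - a / 2) * p ^+ 2 + 4 * Q / a.
Proof.
move=> a0 a2 p0 d0 dQ D0 Dpd.
have Q0 : 0 <= Q by apply: le_trans dQ; exact: sqr_ge0.
have hQa : 0 <= 4 * Q / a by rewrite divr_ge0 // ?mulr_ge0 // ltW.
have [a1|a1] := lerP 1 a.
  have : (1 - a) * Dk <= 0 by rewrite mulr_le0_ge0 // subr_le0.
  have : 0 <= (1 - a / 2) * p ^+ 2 by rewrite mulr_ge0 ?sqr_ge0 // subr_ge0 ler_pdivrMr //; lra.
  lra.
have h1 : (1 - a) * Dk <= (1 - a) * (p + d) ^+ 2 by apply: ler_wpM2l => //; lra.
apply: le_trans h1 _.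
rewrite -(ler_pM2l a0).
have e : a * ((1 - a / 2) * p ^+ 2 + 4 * Q / a) = a * (1 - a / 2) * p ^+ 2 + 4 * Q.
  by field; rewrite gt_eqF.
rewrite e.
have hs := sqr_ge0 (a * p - 2 * (1 - a) * d).
have h2 : (1 - a) * (2 - a) * d ^+ 2 <= 2 * d ^+ 2.
  by apply: ler_wpM2r; [exact: sqr_ge0 | nra].
have h3 : 2 * d ^+ 2 <= 2 * Q by lra.
nra.
Qed.

Lemma dist_arith (lam lam' mu C d : R) : 0 < lam -> lam <= lam' -> 0 < mu ->
  0 <= C -> 0 <= d ->
  (lam + lam') * mu / 2 * d ^+ 2 <= (lam' - lam) * (C * d) ->
  d ^+ 2 <= C ^+ 2 / mu ^+ 2 * (1 - lam' / lam) ^+ 2.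
Proof.
move=> l0 ll m0 C0 d0 h.
have e : C ^+ 2 / mu ^+ 2 * (1 - lam' / lam) ^+ 2 = ((lam' - lam) * C / (lam * mu)) ^+ 2.
  by field; rewrite !gt_eqF.
rewrite e sq_le //; last by rewrite divr_ge0 ?mulr_ge0 // ?subr_ge0 // ltW.
rewrite ler_pdivlMr ?mulr_gt0 //.
have [->|dpos] := eqVneq d 0; first by rewrite mul0r mulr_ge0 // subr_ge0.
have dp : 0 < d by rewrite lt0r dpos d0.
rewrite -(ler_pM2r dp).
have : lam * mu * d ^+ 2 <= (lam + lam') * mu / 2 * d ^+ 2.
  apply: ler_wpM2r; first exact: sqr_ge0.
  rewrite ler_pdivlMr // -mulrA [mu * 2]mulrC mulrA ler_pM2r //; lra.
rewrite expr2; nra.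
Qed.

End Arith.
Theorem lemma2 (R : realType) (n S : nat) (I : 'I_S -> nat)
  (f : 'I_S -> nat -> 'rV[R]_n -> R) (H : 'rV[R]_n -> R) (muH : R)
  (X : set 'rV[R]_n) (Cf CH : R)
  (gamma lambda : nat -> R)
  (x : nat -> 'rV[R]_n)                       (* x_k *)
  (xs : nat -> 'I_S -> nat -> 'rV[R]_n)      (* x^i_{k,j} *)
  (g : nat -> 'I_S -> nat -> 'rV[R]_n)       (* g^i_{k,j} *)
  (Hs : nat -> 'rV[R]_n)                     (* \mathcal{H}_k *)
  (xstar : nat -> 'rV[R]_n) :                (* x^*_{lambda_k} *)
  (0 < S)%N -> (forall i, (0 < I i)%N) ->
  0 < muH -> strongly_convex muH H ->
  (forall i j, (1 <= j <= I i)%N -> convex_fun (f i j)) ->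
  X !=set0 -> compact X -> cvx_set X ->
  (* the constants C_f and C_H *)
  0 < Cf ->
  (forall i j, (1 <= j <= I i)%N -> forall y, X y -> forall gg,
      subgrad (f i j) y gg -> enorm gg <= Cf) ->
  (forall i j, (1 <= j <= I i)%N -> forall y z, X y -> X z ->
      `|f i j y - f i j z| <= Cf * enorm (y - z)) ->
  0 < CH ->
  (forall y, X y -> forall gg, subgrad H y gg -> enorm gg <= CH) ->
  (forall y z, X y -> X z -> `|H y - H z| <= CH * enorm (y - z)) ->
  (forall y, X y -> `|H y| <= CH) ->
  let m : nat := (\sum_(i < S) I i)%N in
  let F : 'rV[R]_n -> R := fun y => \sum_(i < S) \sum_(1 <= j < (I i).+1) f i j y in
  (* positive stepsizes *)
  (forall k, (1 <= k)%N -> 0 < gamma k /\ 0 < lambda k) ->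
  (* FISM iteration *)
  (forall k, (1 <= k)%N -> subgrad H (x k) (Hs k)) ->
  (forall k i, (1 <= k)%N -> xs k i 1%N = x k) ->
  (forall k i j, (1 <= k)%N -> (1 <= j <= I i)%N ->
      subgrad (f i j) (xs k i j) (g k i j) /\
      is_proj X (xs k i j - gamma k *: g k i j
                  - (gamma k * lambda k / m%:R) *: Hs k) (xs k i j.+1)) ->
  (forall k, (1 <= k)%N ->
      x k.+1 = (S%:R)^-1 *: \sum_(i < S) xs k i (I i).+1) ->
  (* stepsize conditions *)
  (forall k, (1 <= k)%N -> 0 < gamma k * lambda k * muH <= 2 * m%:R) ->
  (forall k, (1 <= k)%N -> lambda k.+1 <= lambda k) ->
  (* minimizers of F + lambda_k H over X *)
  (forall k, (1 <= k)%N -> is_argmin X (fun y => F y + lambda k * H y) (xstar k)) ->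
  let C : R := 4 * m%:R ^+ 3 * (Cf ^+ 2 + 2 * lambda 1%N ^+ 2 * CH ^+ 2 / m%:R ^+ 2)
             + 2 * Cf * m%:R ^+ 2 * (Cf + lambda 1%N * CH / m%:R) in
  forall k, (2 <= k)%N ->
    enorm (x k.+1 - xstar k) ^+ 2 <=
      (1 - gamma k * lambda k * muH / (2 * m%:R)) * enorm (x k - xstar k.-1) ^+ 2
      + 4 * m%:R * CH ^+ 2 / (gamma k * lambda k * muH ^+ 3)
          * (1 - lambda k.-1 / lambda k) ^+ 2
      + gamma k ^+ 2 * C.
Proof.
move=> S0 I0 mu0 scH cf Xne Xc cX Cf0 hCf hLf CH0 hCH hLH hHb m F pos hHs hxs1
  hstep hxk hss hlam hmin C k k2.
have mS : (S <= m)%N.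
  have := @leq_sum _ (index_enum 'I_S) xpredT (fun _ => 1%N) I (fun i _ => I0 i).
  by rewrite sum1_card card_ord.
have m0 : 0 < m%:R :> R by rewrite ltr0n; apply: leq_trans mS.
have m1 : 1 <= m%:R :> R by rewrite ler1n; apply: leq_trans mS.
have S0r : 0 < S%:R :> R by rewrite ltr0n.
have Sm : S%:R <= m%:R :> R by rewrite ler_nat.
have Iim : forall i, (I i <= m)%N by move=> i; rewrite /m (bigD1 i) //= leq_addr.
have lam1 : forall kk, (1 <= kk)%N -> lambda kk <= lambda 1%N.
  elim=> [//|kk IH] hk; case: kk IH hk => [|kk] IH hk; first exact: lexx.
  exact: le_trans (hlam _ _) (IH _).
case: k k2 => [//|k] k2; rewrite /=.
have k1 : (1 <= k)%N by [].
have k1' : (1 <= k.+1)%N by [].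
have Xxk : X (x k.+1).
  rewrite hxk //; apply: avg_in => // i.
  have hI : (1 <= I i <= I i)%N by rewrite I0 leqnn.
  by case: (hstep k i (I i) k1 hI) => _ [].
set y := xstar k.+1; set y' := xstar k.
have Xy : X y by case: (hmin _ k1').
have Xy' : X y' by case: (hmin _ k1).
set gam := gamma k.+1; set lam := lambda k.+1; set lam' := lambda k.
have [g0 l0] := pos _ k1'.
have [_ l0'] := pos _ k1.
have ll' : lam <= lam' by exact: hlam.
have [ss0 ss2] := andP (hss _ k1').
set G := Cf + lam * CH / m%:R.
have cl := fun i => @client R n X (I i) (f i) H (xs k.+1 i) (g k.+1 i) (Hs k.+1) (x k.+1) y
  gam lam muH Cf CH m%:R cX Xxk Xy g0 l0 m0 (ltW mu0) (ltW Cf0) (ltW CH0) scH (hHs _ k1')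
  (hCH _ Xxk _ (hHs _ k1')) (hxs1 _ i k1') (fun j hj => hstep _ i j k1' hj) (hCf i) (hLf i)
  (I i) (leqnn _).
set Dk := enorm (x k.+1 - y) ^+ 2.
set W := 2 * gam * lam * (H (x k.+1) - H y) + gam * lam * muH * Dk.
set D1 := enorm (x k.+2 - y) ^+ 2.
have e1 : x k.+2 - y = S%:R^-1 *: \sum_i (xs k.+1 i (I i).+1 - y).
  rewrite hxk // sumrB sumr_const card_ord scalerBr -[y *+ S]scaler_nat scalerA mulVf ?scale1r //.
  by rewrite gt_eqF.
have hD1 : S%:R * D1 <= \sum_i enorm (xs k.+1 i (I i).+1 - y) ^+ 2.
  have Si0 : 0 <= S%:R^-1 :> R by rewrite invr_ge0 ler0n.
  rewrite /D1 e1 enormZ exprMn (ger0_norm Si0).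
  have := @sum_norm2 _ _ S (fun i => xs k.+1 i (I i).+1 - y).
  set Z := enorm _ ^+ 2; set T := \sum_i _ => hZ.
  have -> : S%:R * (S%:R^-1 ^+ 2 * Z) = Z / S%:R by field; rewrite gt_eqF.
  by rewrite ler_pdivrMr // mulrC.
have hsB : \sum_i enorm (xs k.+1 i (I i).+1 - y) ^+ 2 <=
   \sum_i (Dk - 2 * gam * \sum_(1 <= l < (I i).+1) (f i l (x k.+1) - f i l y)
       - (I i)%:R / m%:R * W + gam ^+ 2 * G ^+ 2 * (I i)%:R ^+ 2).
  by apply: ler_sum => i _; have [_ [_ h]] := cl i; exact: h.
have eF : \sum_i \sum_(1 <= l < (I i).+1) (f i l (x k.+1) - f i l y) = F (x k.+1) - F y.
  by rewrite /F -sumrB; apply: eq_bigr => i _; rewrite sumrB.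
have eI : \sum_i ((I i)%:R / m%:R) = 1 :> R.
  by rewrite -mulr_suml -natr_sum mulfV // gt_eqF.
have hI2 : \sum_i (I i)%:R ^+ 2 <= m%:R ^+ 2 :> R.
  apply: (@le_trans _ _ (\sum_i (I i)%:R * m%:R)).
    apply: ler_sum => i _; rewrite expr2; apply: ler_wpM2l => //.
    by rewrite ler_nat.
  by rewrite -mulr_suml -natr_sum expr2.
have eS : \sum_i (Dk - 2 * gam * \sum_(1 <= l < (I i).+1) (f i l (x k.+1) - f i l y)
       - (I i)%:R / m%:R * W + gam ^+ 2 * G ^+ 2 * (I i)%:R ^+ 2)
   = S%:R * Dk - 2 * gam * (F (x k.+1) - F y) - W + gam ^+ 2 * G ^+ 2 * \sum_i (I i)%:R ^+ 2.
  rewrite !big_split /= !sumrN sumr_const card_ord -!mulr_sumr -mulr_suml eF eI.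
  by rewrite -[Dk *+ S]mulr_natl mul1r.
have hphi : F y + lam * H y <= F (x k.+1) + lam * H (x k.+1).
  by case: (hmin _ k1') => _ /(_ _ Xxk).
have G0 : 0 <= G.
  have : 0 <= lam * CH / m%:R by apply: divr_ge0; [apply: mulr_ge0; apply: ltW | apply: ltW].
  rewrite /G; lra.
have gG0 : 0 <= gam ^+ 2 * G ^+ 2 by rewrite mulr_ge0 // sqr_ge0.
have hI2' := ler_wpM2l gG0 hI2.
have hphi' : 0 <= 2 * gam * (F (x k.+1) - F y + lam * (H (x k.+1) - H y)).
  by apply: mulr_ge0; [apply: mulr_ge0; [by [] | apply: ltW] | lra].
have hSD : S%:R * D1 <= S%:R * Dk - gam * lam * muH * Dk + gam ^+ 2 * G ^+ 2 * m%:R ^+ 2.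
  have := le_trans hD1 hsB; rewrite eS /W; lra.
set a := gam * lam * muH / m%:R.
have a0 : 0 < a by rewrite /a divr_gt0 // !mulr_gt0.
have a2 : a <= 2 by rewrite /a ler_pdivrMr.
have Dk0 : 0 <= Dk by exact: sqr_ge0.
have hSa : S%:R * a * Dk <= gam * lam * muH * Dk.
  apply: ler_wpM2r => //.
  have e : S%:R * a = (S%:R / m%:R) * (gam * lam * muH) by rewrite /a; field; rewrite gt_eqF.
  have h1 : S%:R / m%:R <= 1 :> R by rewrite ler_pdivrMr // mul1r.
  have h2 : 0 < gam * lam * muH by rewrite !mulr_gt0.
  rewrite e; nra.
have hcontr : D1 <= (1 - a) * Dk + gam ^+ 2 * G ^+ 2 * m%:R ^+ 2.
  rewrite -(ler_pM2l S0r).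
  have : gam ^+ 2 * G ^+ 2 * m%:R ^+ 2 <= S%:R * (gam ^+ 2 * G ^+ 2 * m%:R ^+ 2).
    have S1 : 1 <= S%:R :> R by rewrite ler1n.
    have P0 : 0 <= gam ^+ 2 * G ^+ 2 * m%:R ^+ 2 by rewrite mulr_ge0 // sqr_ge0.
    nra.
  lra.
have hC : gam ^+ 2 * G ^+ 2 * m%:R ^+ 2 <= gam ^+ 2 * C.
  rewrite -mulrA; apply: ler_wpM2l; first exact: sqr_ge0.
  set l1 := lambda 1%N.
  have hl1 : lam <= l1 := lam1 _ k1'.
  have GG1 : G <= Cf + l1 * CH / m%:R.
    rewrite /G lerD2l; apply: ler_wpM2r; first by rewrite invr_ge0 ler0n.
    by apply: ler_wpM2r => //; apply: ltW.
  have l10 : 0 < l1 by apply: lt_le_trans hl1.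
  have hG2 : G ^+ 2 <= (Cf + l1 * CH / m%:R) ^+ 2.
    by rewrite sq_le //; apply: le_trans GG1.
  have e1' : m%:R ^+ 2 * (Cf + l1 * CH / m%:R) ^+ 2
      = m%:R ^+ 2 * Cf ^+ 2 + 2 * m%:R * Cf * (l1 * CH) + (l1 * CH) ^+ 2.
    by field; rewrite gt_eqF.
  have eC : C = 4 * m%:R ^+ 3 * Cf ^+ 2 + 8 * m%:R * (l1 * CH) ^+ 2
      + 2 * Cf ^+ 2 * m%:R ^+ 2 + 2 * m%:R * Cf * (l1 * CH).
    have gen : forall (M c l h : R), M != 0 ->
      4 * M ^+ 3 * (c ^+ 2 + 2 * l ^+ 2 * h ^+ 2 / M ^+ 2) + 2 * c * M ^+ 2 * (c + l * h / M)
      = 4 * M ^+ 3 * c ^+ 2 + 8 * M * (l * h) ^+ 2 + 2 * c ^+ 2 * M ^+ 2 + 2 * M * c * (l * h).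
      by move=> M c l h hM; field.
    by rewrite /C -/l1 gen // gt_eqF.
  have h1 := ler_wpM2l (sqr_ge0 (m%:R : R)) hG2.
  have h2 : (l1 * CH) ^+ 2 <= 8 * m%:R * (l1 * CH) ^+ 2.
    have := sqr_ge0 (l1 * CH); nra.
  have h3 : 0 <= 4 * m%:R ^+ 3 * Cf ^+ 2 by rewrite !mulr_ge0 ?sqr_ge0 ?exprn_ge0 // ltW.
  have h4 : 0 <= m%:R ^+ 2 * Cf ^+ 2 by rewrite mulr_ge0 ?sqr_ge0.
  rewrite mulrC eC; lra.
set d := enorm (y' - y).
have d0 : 0 <= d := enorm_ge0 _.
have cvF : convex_fun F by exact: convex_sum cf.
have hd : d ^+ 2 <= CH ^+ 2 / muH ^+ 2 * (1 - lam' / lam) ^+ 2.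
  apply: (@dist_arith R lam lam' muH CH d l0 ll' mu0 (ltW CH0) d0).
  have sc1 := @sc_comb _ _ F H lam muH cvF scH (ltW l0).
  have sc2 := @sc_comb _ _ F H lam' muH cvF scH (ltW l0').
  have h1 := @argmin_strong _ _ X _ _ _ _ cX sc1 (mulr_ge0 (ltW l0) (ltW mu0)) (hmin _ k1') Xy'.
  have h2 := @argmin_strong _ _ X _ _ _ _ cX sc2 (mulr_ge0 (ltW l0') (ltW mu0)) (hmin _ k1) Xy.
  rewrite /= -/d in h1; rewrite /= enormB_sym -/d in h2.
  have := hLH _ _ Xy Xy'; rewrite ler_norml enormB_sym -/d => /andP[_ h4].
  have h5 : (lam' - lam) * (H y - H y') <= (lam' - lam) * (CH * d).
    by apply: ler_wpM2l => //; rewrite subr_ge0.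
  lra.
set p := enorm (x k.+1 - y').
have p0 : 0 <= p := enorm_ge0 _.
have hDk : Dk <= (p + d) ^+ 2.
  rewrite /Dk sq_le ?addr_ge0 //; last exact: enorm_ge0.
  have -> : x k.+1 - y = (x k.+1 - y') + (y' - y) by rewrite addrA subrK.
  exact: enormD.
have ca := @combine_arith R a p d _ Dk a0 a2 p0 d0 hd Dk0 hDk.
have e3 : 1 - a / 2 = 1 - gam * lam * muH / (2 * m%:R).
  by rewrite /a; field; rewrite gt_eqF.
have gen : forall (M gg ll mm hh r : R), M != 0 -> gg != 0 -> ll != 0 -> mm != 0 ->
    4 * (hh ^+ 2 / mm ^+ 2 * r) / (gg * ll * mm / M) = 4 * M * hh ^+ 2 / (gg * ll * mm ^+ 3) * r.
  move=> M gg ll mm hh r hM hg hl hm; field; by rewrite hM hg hl hm.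
rewrite gen ?gt_eqF // e3 in ca.
lra.
Qed.
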